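(* $r^{(1)}=\frac nN$. Moreover, an $(N,n)$ dual pair $(F,G)$ for $\mathcal H$ belongs to $\mathcal R^{(1)}$ if and only if it is $1$-uniform, i.e. $\langle f_i,g_i\rangle=\frac nN$ for all $i$.
   Context: $\mathcal H$ is a complex Hilbert space of finite dimension $n$, inner product linear in the first argument, $N\ge n$. A finite sequence $F=\{f_i\}_{i=1}^N$ is a frame if there are $0<A\le B$ with $A\|f\|^2\le\sum_i|\langle f,f_i\rangle|^2\le B\|f\|^2$ for all $f$. $G=\{g_i\}_{i=1}^N$ is a dual of $F$ if $f=\sum_i\langle f,g_i\rangle f_i$ for all $f$; $(F,G)$ is then an $(N,n)$ dual pair. A dual pair is $1$-uniform if $\langle f_i,g_i\rangle$ is independent of $i$. $E_{\Lambda,F,G}f=\sum_{i\in\Lambda}\langle f,f_i\rangle g_i$ for $\Lambda\subseteq\{1,\dots,N\}$; $\rho$ is spectral radius; $r^{(1)}_{F,G}=\max_{1\le i\le N}\rho(E_{\{i\},F,G})$; $r^{(1)}=\inf\{r^{(1)}_{F,G}:(F,G)\text{ an }(N,n)\text{ dual pair for }\mathcal H\}$; $\mathcal R^{(1)}=\{(F,G):r^{(1)}_{F,G}=r^{(1)}\}$. *)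

(* Defs.v *)
From HB Require Import structures.
From mathcomp Require Import all_boot all_order all_algebra.
From mathcomp Require Import complex.
From mathcomp Require Import classical_sets reals.
Set Implicit Arguments. Unset Strict Implicit. Unset Printing Implicit Defensive.
Import Order.TTheory GRing.Theory Num.Theory.
Local Open Scope ring_scope.
Local Open Scope classical_set_scope.

Section FrameDefs.
Variable R : realType.
Local Notation C := (R[i]).
Variable n N : nat.

Definition ip (f g : 'rV[C]_n) : C := \sum_(k < n) f 0 k * Num.conj (g 0 k).

Definition is_frame (F : 'I_N -> 'rV[C]_n) : Prop :=
  exists A B : C, 0 < A /\ A <= B /\
    forall f : 'rV[C]_n,
      A * ip f f <= \sum_(i < N) `|ip f (F i)| ^+ 2 /\
      \sum_(i < N) `|ip f (F i)| ^+ 2 <= B * ip f f.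

Definition is_dual (F G : 'I_N -> 'rV[C]_n) : Prop :=
  forall f : 'rV[C]_n, f = \sum_(i < N) ip f (G i) *: F i.

Definition dual_pair (F G : 'I_N -> 'rV[C]_n) : Prop :=
  is_frame F /\ is_frame G /\ is_dual F G.

Definition uniform1 (F G : 'I_N -> 'rV[C]_n) : Prop :=
  exists c : C, forall i, ip (F i) (G i) = c.

(* Matrix (acting on row vectors from the right, f |-> f *m M) of
   E_{Lambda,F,G} f = sum_{i in Lambda} <f, f_i> g_i. *)
Definition Emx (Lam : {set 'I_N}) (F G : 'I_N -> 'rV[C]_n) : 'M[C]_n :=
  \sum_(i in Lam) (map_mx Num.conj (F i))^T *m G i.

Definition specrad (M : 'M[C]_n) : R :=
  sup [set r : R | exists a : C, eigenvalue M a /\ Complex r 0 = `|a|].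

Definition r1FG (F G : 'I_N -> 'rV[C]_n) : R :=
  \big[Num.max/0]_(i < N) specrad (Emx [set i] F G).

Definition r1 : R :=
  inf [set r : R | exists F G : 'I_N -> 'rV[C]_n, dual_pair F G /\ r = r1FG F G].

Definition in_R1 (F G : 'I_N -> 'rV[C]_n) : Prop :=
  dual_pair F G /\ r1FG F G = r1.

End FrameDefs.

(* Main.v *)
Require Import Defs.
From HB Require Import structures.
From mathcomp Require Import all_boot all_order all_algebra.
From mathcomp Require Import complex.
From mathcomp Require Import classical_sets reals.
From mathcomp Require Import ring lra.
Import Order.TTheory GRing.Theory Num.Theory.
Set Implicit Arguments. Unset Strict Implicit. Unset Printing Implicit Defensive.
Local Open Scope ring_scope.

Section Aux.
Variable R : realType.
Local Notation C := (R[i]).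
Local Notation nc := (@Normc.normc R).

Lemma ncE (x : C) : `|x| = ((nc x)%:C)%C.
Proof. by []. Qed.

Lemma nc_ge0 (x : C) : 0 <= nc x.
Proof. by rewrite -ler0c -ncE normr_ge0. Qed.

Lemma nc_sum (I : finType) (x : I -> C) : nc (\sum_i x i) <= \sum_i nc (x i).
Proof.
rewrite -lecR -ncE rmorph_sum /=.
apply: le_trans (ler_norm_sum _ _ _) _.
by rewrite le_eqVlt; apply/orP; left; apply/eqP/eq_bigr => i _; rewrite ncE.
Qed.

Lemma ncJ (x : C) : nc (Num.conj x) = nc x.
Proof. by apply: complexI; rewrite -!ncE; apply: normcJ. Qed.

Lemma ncM (x y : C) : nc (x * y) = nc x * nc y.
Proof. exact: Normc.normcM. Qed.

Lemma mulJ_nc (x : C) : x * Num.conj x = ((nc x ^+ 2)%:C)%C.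
Proof. by rewrite -normCK ncE rmorphXn. Qed.

End Aux.
Section Dual.
Variable R : realType.
Local Notation C := (R[i]).
Variables n N : nat.

Lemma ip_mx (f g : 'rV[C]_n) : f *m (map_mx Num.conj g)^T = (ip f g)%:M.
Proof.
apply/matrixP => i j; rewrite !ord1 !mxE /ip /=.
by apply: eq_bigr => k _; rewrite !mxE.
Qed.

Lemma dual_mxP (F G : 'I_N -> 'rV[C]_n) :
  is_dual F G <-> \sum_i (map_mx Num.conj (G i))^T *m F i = 1%:M.
Proof.
have E f : f *m (\sum_i (map_mx Num.conj (G i))^T *m F i) =
           \sum_i ip f (G i) *: F i.
  rewrite mulmx_sumr; apply: eq_bigr => i _.
  by rewrite mulmxA ip_mx mul_scalar_mx.
split => [H|H f].
  apply/row_matrixP => i; rewrite -[X in row i X]mul1mx row_mul E -H.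
  by [].
by rewrite -E H mulmx1.
Qed.

Lemma dual_sum (F G : 'I_N -> 'rV[C]_n) :
  is_dual F G -> \sum_i ip (F i) (G i) = n%:R.
Proof.
move/dual_mxP => H.
have := congr1 mxtrace H; rewrite mxtrace1 => <-.
rewrite raddf_sum; apply: eq_bigr => i _ /=.
rewrite (mxtrace_mulC (map_mx Num.conj (G i))^T (F i)). by rewrite ip_mx mxtrace_scalar.
Qed.

Lemma dual_sym (F G : 'I_N -> 'rV[C]_n) : is_dual F G -> is_dual G F.
Proof.
move/dual_mxP => H; apply/dual_mxP.
have := congr1 (fun M => (map_mx Num.conj M)^T) H.
rewrite map_mx_sum raddf_sum /= => H2.
have E1 : (map_mx Num.conj (1%:M : 'M[C]_n))^T = 1%:M by rewrite map_mx1 trmx1.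
rewrite -E1 -H2; apply: eq_bigr => i _.
rewrite map_mxM trmx_mul; apply/matrixP => a b; rewrite !mxE.
by apply: eq_bigr => k _; rewrite !mxE; congr (_ * _); rewrite /= conjCK.
Qed.

End Dual.
Lemma CS (R : realType) (I : finType) (a b : I -> R) :
  (\sum_i a i * b i) ^+ 2 <= (\sum_i a i ^+ 2) * (\sum_i b i ^+ 2).
Proof.
have E1 : (\sum_i a i * b i) ^+ 2 = \sum_i \sum_j (a i * b i) * (a j * b j).
  by rewrite expr2 mulr_suml; apply: eq_bigr => i _; rewrite mulr_sumr.
have E2 : (\sum_i a i ^+ 2) * (\sum_i b i ^+ 2) = \sum_i \sum_j a i ^+ 2 * b j ^+ 2.
  by rewrite mulr_suml; apply: eq_bigr => i _; rewrite mulr_sumr.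
have E3 : (\sum_i a i ^+ 2) * (\sum_i b i ^+ 2) = \sum_i \sum_j a j ^+ 2 * b i ^+ 2.
  rewrite E2 exchange_big /=; apply: eq_bigr => i _.
  by apply: eq_bigr => j _.
have H : \sum_i \sum_j ((a i * b i) * (a j * b j)) *+ 2 <=
         \sum_i \sum_j (a i ^+ 2 * b j ^+ 2 + a j ^+ 2 * b i ^+ 2).
  apply: ler_sum => i _; apply: ler_sum => j _.
  have := sqr_ge0 (a i * b j - a j * b i); rewrite -subr_ge0 => h.
  rewrite -subr_ge0; apply: le_trans h _; rewrite le_eqVlt; apply/orP; left.
  apply/eqP; ring.
have H2 : \sum_i \sum_j ((a i * b i) * (a j * b j)) *+ 2 =
          (\sum_i \sum_j (a i * b i) * (a j * b j)) *+ 2.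
  rewrite -sumrMnl; apply: eq_bigr => i _; by rewrite -sumrMnl.
have H3 : \sum_i \sum_j (a i ^+ 2 * b j ^+ 2 + a j ^+ 2 * b i ^+ 2) =
   \sum_i \sum_j a i ^+ 2 * b j ^+ 2 + \sum_i \sum_j a j ^+ 2 * b i ^+ 2.
  rewrite -big_split /=; apply: eq_bigr => i _; by rewrite -big_split.
rewrite H2 H3 -E1 -E2 -E3 in H.
rewrite -!mulr2n in H *.
move: H; set x := (\sum_i _) ^+ 2; set y := _ * _.
rewrite !mulr2n => H; lra.
Qed.
Section Frames.
Variable R : realType.
Local Notation C := (R[i]).
Local Notation nc := (@Normc.normc R).
Variables n N : nat.

Definition sq (f : 'rV[C]_n) : R := \sum_k nc (f 0 k) ^+ 2.

Lemma sq_ge0 f : 0 <= sq f.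
Proof. by apply: sumr_ge0 => k _; apply: exprn_ge0; apply: nc_ge0. Qed.

Lemma ip_ff f : ip f f = ((sq f)%:C)%C.
Proof. by rewrite /ip /sq rmorph_sum; apply: eq_bigr => k _; apply: mulJ_nc. Qed.

Lemma nc_real (x : R) : 0 <= x -> nc (x%:C)%C = x.
Proof. by move=> hx; rewrite /Normc.normc /= expr0n addr0 sqrtr_sqr ger0_norm. Qed.

Lemma ip_conj (f g : 'rV[C]_n) : ip g f = Num.conj (ip f g).
Proof.
rewrite /ip rmorph_sum; apply: eq_bigr => k _.
by rewrite rmorphM /= conjCK mulrC.
Qed.

Lemma ip_le (f v : 'rV[C]_n) : nc (ip f v) ^+ 2 <= sq f * sq v.
Proof.
have h1 : nc (ip f v) <= \sum_k nc (f 0 k) * nc (v 0 k).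
  rewrite /ip; apply: le_trans (nc_sum _) _.
  by rewrite le_eqVlt; apply/orP; left; apply/eqP/eq_bigr => k _; rewrite ncM ncJ.
have h0 := nc_ge0 (ip f v).
apply: le_trans (CS (fun k => nc (f 0 k)) (fun k => nc (v 0 k))).
rewrite !expr2; by apply: ler_pM.
Qed.

Lemma ip_linl (I : finType) (a : I -> C) (F : I -> 'rV[C]_n) (f : 'rV[C]_n) :
  ip (\sum_i a i *: F i) f = \sum_i a i * ip (F i) f.
Proof.
rewrite /ip; under eq_bigr do rewrite summxE mulr_suml.
rewrite exchange_big /=; apply: eq_bigr => i _; rewrite mulr_sumr.
by apply: eq_bigr => k _; rewrite mxE mulrA.
Qed.

Definition tsq (F : 'I_N -> 'rV[C]_n) : R := \sum_i sq (F i).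

Lemma tsq_ge0 F : 0 <= tsq F.
Proof. by apply: sumr_ge0 => i _; apply: sq_ge0. Qed.

Lemma sum_normC (F : 'I_N -> 'rV[C]_n) f :
  \sum_i `|ip f (F i)| ^+ 2 = ((\sum_i nc (ip f (F i)) ^+ 2)%:C)%C.
Proof. by rewrite rmorph_sum; apply: eq_bigr => i _; rewrite ncE rmorphXn. Qed.

Lemma upper (F : 'I_N -> 'rV[C]_n) f :
  \sum_i nc (ip f (F i)) ^+ 2 <= tsq F * sq f.
Proof.
rewrite /tsq mulr_suml; apply: ler_sum => i _.
by rewrite mulrC; apply: ip_le.
Qed.

Lemma lower (F G : 'I_N -> 'rV[C]_n) f : is_dual F G ->
  sq f <= (tsq F + 1) * \sum_i nc (ip f (G i)) ^+ 2.
Proof.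
move=> D.
set X := \sum_i _.
have X0 : 0 <= X by apply: sumr_ge0 => i _; apply: exprn_ge0; apply: nc_ge0.
have s0 := sq_ge0 f.
have t0 := tsq_ge0 F.
have h1 : sq f <= \sum_i nc (ip f (G i)) * nc (ip f (F i)).
  rewrite -[Y in Y <= _]nc_real // -ip_ff {1}(D f) ip_linl.
  apply: le_trans (nc_sum _) _.
  apply: ler_sum => i _; rewrite ncM (ip_conj f (F i)) ncJ //.
have h2 : sq f ^+ 2 <= X * (tsq F * sq f).
  rewrite expr2; apply: le_trans (ler_pM s0 s0 h1 h1) _ ; rewrite -expr2.
  apply: le_trans (CS (fun i => nc (ip f (G i))) (fun i => nc (ip f (F i)))) _.
  apply: ler_wpM2l => //; exact: upper.
have [->|sp] := eqVneq (sq f) 0.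
  by rewrite mulr_ge0 // addr_ge0.
have sp' : 0 < sq f by rewrite lt_neqAle eq_sym sp s0.
have h3 : sq f <= X * tsq F.
  by rewrite -(ler_pM2r sp') -expr2 -mulrA.
nra.
Qed.

Lemma frame_of_dual (F G : 'I_N -> 'rV[C]_n) : is_dual F G -> is_frame G.
Proof.
move=> D.
have t0 := tsq_ge0 F; have t1 := tsq_ge0 G.
exists (((tsq F + 1)^-1)%:C)%C, (((tsq G + 1))%:C)%C; split; [|split].
- by rewrite ltcR invr_gt0; lra.
- rewrite lecR; apply: (@le_trans _ _ 1); last lra.
  have p : 0 < tsq F + 1 by lra.
  by rewrite invf_le1 //; lra.
- move=> f; rewrite sum_normC ip_ff -!rmorphM /= !lecR; split.
    rewrite ler_pdivrMl; last lra.
    exact: lower D.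
  apply: le_trans (upper G f) _.
  by apply: ler_wpM2r; [apply: sq_ge0| lra].
Qed.

Lemma dual_pair_of_dual (F G : 'I_N -> 'rV[C]_n) : is_dual F G -> dual_pair F G.
Proof.
move=> D; split; [|split] => //.
  exact: frame_of_dual (dual_sym D).
exact: frame_of_dual D.
Qed.

End Frames.
Section Spec.
Variable R : realType.
Local Notation C := (R[i]).
Local Notation nc := (@Normc.normc R).
Variables n N : nat.
Local Open Scope classical_set_scope.

Lemma ipZ (c : C) (f g : 'rV[C]_n) : ip (c *: f) g = c * ip f g.
Proof.
rewrite /ip mulr_sumr; apply: eq_bigr => k _; by rewrite mxE mulrA.
Qed.

Lemma ip0 (g : 'rV[C]_n) : ip 0 g = 0.
Proof. by rewrite -(scale0r (0 : 'rV[C]_n)) ipZ mul0r. Qed.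

Lemma rank1_mul (u v x : 'rV[C]_n) :
  x *m ((map_mx Num.conj u)^T *m v) = ip x u *: v.
Proof. by rewrite mulmxA ip_mx mul_scalar_mx. Qed.

Lemma eig_rank1 (u v : 'rV[C]_n) a :
  eigenvalue ((map_mx Num.conj u)^T *m v) a -> a = 0 \/ a = ip v u.
Proof.
move=> /eigenvalueP [x]; rewrite rank1_mul => E x0.
have [->|a0] := eqVneq a 0; first by left.
right.
have xu : ip x u != 0.
  apply/negP => /eqP h; move: E; rewrite h scale0r => /esym /eqP.
  by rewrite scaler_eq0 (negbTE a0) (negbTE x0).
have := congr1 (fun y => ip y u) E; rewrite /= !ipZ => h.
by apply: (mulIf xu); rewrite -h mulrC.
Qed.

Lemma eig_rank1_c (u v : 'rV[C]_n) :
  ip v u != 0 -> eigenvalue ((map_mx Num.conj u)^T *m v) (ip v u).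
Proof.
move=> h; apply/eigenvalueP; exists v; first by rewrite rank1_mul.
by apply/negP => /eqP v0; move: h; rewrite v0 ip0 eqxx.
Qed.

Lemma specrad_rank1 (u v : 'rV[C]_n) :
  specrad ((map_mx Num.conj u)^T *m v) = nc (ip v u).
Proof.
rewrite /specrad; set S := [set r : R | _].
have HS : forall r, S r -> r = 0 \/ r = nc (ip v u).
  move=> r [a [ea ra]]; have {}ra : r = nc a by case: ra.
  rewrite ra; by case: (eig_rank1 ea) => ->; [left; rewrite Normc.normc0|right].
have [c0|c0] := eqVneq (ip v u) 0.
  rewrite c0 Normc.normc0.
  have : S `<=` [set 0] by move=> r /HS; rewrite c0 Normc.normc0 => -[].
  by case/subset_set1 => ->; [exact: sup0|exact: sup1].
have Sc : S (nc (ip v u)) by exists (ip v u); split => //; exact: eig_rank1_c.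
have ub : ubound S (nc (ip v u)).
  by move=> r /HS [->|->] //; exact: nc_ge0.
apply/eqP; rewrite eq_le; apply/andP; split.
  by apply: ge_sup => //; exists (nc (ip v u)).
apply: sup_upper_bound => //; split; first by exists (nc (ip v u)).
by exists (nc (ip v u)).
Qed.

Lemma r1FG_E (F G : 'I_N -> 'rV[C]_n) :
  r1FG F G = \big[Num.max/0]_(i < N) nc (ip (F i) (G i)).
Proof.
rewrite /r1FG; apply: eq_bigr => i _.
by rewrite /Emx big_set1 specrad_rank1 ip_conj ncJ.
Qed.

End Spec.
Section Ineq.
Variable R : realType.
Local Notation C := (R[i]).
Local Notation nc := (@Normc.normc R).
Variables n N : nat.
Hypothesis hn : (0 < n)%N.
Hypothesis hnN : (n <= N)%N.

Lemma Re_sum (I : finType) (x : I -> C) : complex.Re (\sum_i x i) = \sum_i complex.Re (x i).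
Proof.
apply: (big_morph (@complex.Re R)) => // -[a b] [c d] //.
Qed.

Lemma Im_sum (I : finType) (x : I -> C) : complex.Im (\sum_i x i) = \sum_i complex.Im (x i).
Proof.
apply: (big_morph (@complex.Im R)) => // -[a b] [c d] //.
Qed.

Lemma natC (k : nat) : (k%:R : C) = ((k%:R : R)%:C)%C.
Proof. by rewrite rmorph_nat. Qed.

Lemma N_gt0 : (0 < N%:R :> R).
Proof. by rewrite ltr0n; apply: leq_trans hn hnN. Qed.

Lemma max_ge (F G : 'I_N -> 'rV[C]_n) : is_dual F G ->
  n%:R / N%:R <= \big[Num.max/0]_(i < N) nc (ip (F i) (G i)).
Proof.
move=> D; set M := \big[_/_]_(i < N) _.
have hs := dual_sum D.
have h1 : n%:R <= \sum_i nc (ip (F i) (G i)).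
  have := nc_sum (fun i => ip (F i) (G i)); rewrite hs natC nc_real //.
have h2 : \sum_i nc (ip (F i) (G i)) <= \sum_(i < N) M.
  by apply: ler_sum => i _; apply: le_bigmax.
rewrite sumr_const card_ord -mulr_natl in h2.
rewrite ler_pdivrMr; last exact: N_gt0. rewrite mulrC.
by apply: le_trans h1 h2.
Qed.

Lemma max_eq_all (F G : 'I_N -> 'rV[C]_n) : is_dual F G ->
  \big[Num.max/0]_(i < N) nc (ip (F i) (G i)) = n%:R / N%:R ->
  forall i, ip (F i) (G i) = n%:R / N%:R.
Proof.
move=> D hM.
have hs := dual_sum D.
set t : R := n%:R / N%:R.
have Nt : N%:R * t = n%:R by rewrite /t mulrC -mulrA mulVf ?mulr1 // gt_eqF // N_gt0.
have hle : forall i, nc (ip (F i) (G i)) <= t.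
  by move=> i; rewrite /t -hM; apply: le_bigmax.
have hRe : forall i, complex.Re (ip (F i) (G i)) <= nc (ip (F i) (G i)).
  move=> i; case: (ip _ _) => a b /=.
  apply: le_trans (ler_norm a) _; rewrite -sqrtr_sqr.
  rewrite ler_sqrt ?lerDl ?sqr_ge0 //; by apply: addr_ge0; apply: sqr_ge0.
have hsum : \sum_i (t - complex.Re (ip (F i) (G i))) = 0.
  have Rn : complex.Re (n%:R : C) = n%:R by rewrite natC.
  by rewrite sumrB -Re_sum hs Rn sumr_const card_ord -[t *+ N]mulr_natl Nt subrr.
have hz : forall i, t - complex.Re (ip (F i) (G i)) = 0.
  move=> i; move/eqP: hsum; rewrite psumr_eq0; last first.
    by move=> j _; rewrite subr_ge0; apply: le_trans (hRe j) (hle j).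
  by move/allP => /(_ i (mem_index_enum _)) /eqP.
move=> i.
have hr : complex.Re (ip (F i) (G i)) = t by have := hz i; lra.
have hl := hle i.
suff -> : ip (F i) (G i) = (t%:C)%C by rewrite /t rmorphM fmorphV !rmorph_nat.
move: hr hl; case: (ip _ _) => a b /= -> h.
have t0 : 0 <= t by rewrite /t divr_ge0 ?ler0n.
have : b ^+ 2 <= 0.
  have h2 : Num.sqrt (t ^+ 2 + b ^+ 2) ^+ 2 <= t ^+ 2.
    by rewrite expr2 [X in _ <= X]expr2; apply: ler_pM => //; apply: sqrtr_ge0.
  rewrite sqr_sqrtr in h2; last by apply: addr_ge0; apply: sqr_ge0.
  lra.
move=> hb; have b0 : b = 0.
  by apply/eqP; rewrite -sqrf_eq0 eq_le hb sqr_ge0.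
by rewrite b0.
Qed.

Lemma all_max (F G : 'I_N -> 'rV[C]_n) : is_dual F G ->
  (forall i, ip (F i) (G i) = n%:R / N%:R) ->
  \big[Num.max/0]_(i < N) nc (ip (F i) (G i)) = n%:R / N%:R.
Proof.
move=> D h; apply/eqP; rewrite eq_le max_ge // andbT.
have t0 : 0 <= n%:R / N%:R :> R by rewrite divr_ge0 ?ler0n.
apply/bigmax_leP; split => // i _.
have E : (n%:R / N%:R : C) = ((n%:R / N%:R : R)%:C)%C.
  by rewrite rmorphM fmorphV !rmorph_nat.
by rewrite h E nc_real.
Qed.

End Ineq.
Section Constr.
Variable R : realType.
Local Notation C := (R[i]).
Variables n N : nat.
Hypothesis hn : (0 < n)%N.
Hypothesis hnN : (n <= N)%N.

Let t : R := (N - n)%:R / N%:R.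
Definition fr (i k : nat) : R := if (i < n)%N then (k == i)%:R else 1.
Definition gr (i k : nat) : R := if (i < n)%N then (k == i)%:R - t else N%:R^-1.

Definition F0 (i : 'I_N) : 'rV[C]_n := \row_(k < n) ((fr i k)%:C)%C.
Definition G0 (i : 'I_N) : 'rV[C]_n := \row_(k < n) ((gr i k)%:C)%C.

Lemma sum_delta (m k : nat) (g : nat -> R) : (k < m)%N ->
  \sum_(0 <= i < m) (k == i)%:R * g i = g k.
Proof.
move=> hk; rewrite big_mkord (bigD1 (Ordinal hk)) //= eqxx mul1r big1 ?addr0 //.
move=> i hi; suff -> : (k == i) = false by rewrite mul0r.
by apply/negbTE; apply: contra hi => /eqP e; apply/eqP/val_inj.
Qed.

Lemma conjR (x : R) : Num.conj ((x%:C)%C : C) = (x%:C)%C.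
Proof. exact: conjc_real. Qed.

Lemma ip_real (f g : 'rV[C]_n) (a b : nat -> R) :
  (forall k : 'I_n, f 0 k = ((a k)%:C)%C) -> (forall k : 'I_n, g 0 k = ((b k)%:C)%C) ->
  ip f g = ((\sum_(k < n) a k * b k)%:C)%C.
Proof.
move=> ha hb; rewrite /ip rmorph_sum; apply: eq_bigr => k _.
by rewrite ha hb rmorphM /= conjR.
Qed.

Lemma NR0 : N%:R != 0 :> R.
Proof. by rewrite pnatr_eq0 -lt0n; apply: leq_trans hn hnN. Qed.

Lemma ip_F0G0 i : ip (F0 i) (G0 i) = n%:R / N%:R.
Proof.
rewrite (@ip_real _ _ (fr i) (gr i)); last 2 first.
- by move=> k; rewrite mxE.
- by move=> k; rewrite mxE.
have -> : \sum_(k < n) fr i k * gr i k = n%:R / N%:R.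
  rewrite /fr /gr; have [hi|hi] := boolP (i < n)%N; rewrite ?hi ?(negbTE hi).
    rewrite -(big_mkord (fun _ => true) (fun k : nat => (k == i)%:R * ((k == i)%:R - t))).
    rewrite (eq_bigr (fun k => ((i : nat) == k)%:R * ((k == i)%:R - t))); last first.
      by move=> k _; rewrite eq_sym.
    rewrite (sum_delta (fun k => ((k == i)%:R - t)) hi).
    rewrite eqxx /= /t natrB //; field; exact: NR0.
  by rewrite sumr_const card_ord mul1r mulr_natl.
by rewrite rmorphM fmorphV !rmorph_nat.
Qed.

Lemma dual_F0G0 : is_dual F0 G0.
Proof.
apply/dual_mxP; apply/matrixP => j k; rewrite summxE.
rewrite (_ : \sum_i _ = ((\sum_(i < N) gr i j * fr i k)%:C)%C); last first.
  rewrite rmorph_sum; apply: eq_bigr => i _.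
  by rewrite !mxE big_ord1 !mxE /= conjR rmorphM.
rewrite !mxE.
have -> : \sum_(i < N) gr i j * fr i k = (j == k)%:R.
  rewrite -(big_mkord (fun _ => true) (fun i : nat => gr i j * fr i k)) (@big_cat_nat _ _ _ n) //=.
  rewrite (eq_big_nat _ _ (F2 := fun i => ((k : nat) == i)%:R * (((j : nat) == i)%:R - t))); last first.
    by move=> i /andP [_ hi]; rewrite /gr /fr hi mulrC.
  rewrite sum_delta // (eq_big_nat _ _ (F2 := fun i => N%:R^-1)); last first.
    by move=> i /andP [hi _]; rewrite /gr /fr ltnNge hi mulr1.
  rewrite sumr_const_nat /t.
  have NR := NR0.
  rewrite -[N%:R^-1 *+ _]mulr_natl; field.
by [].
by rewrite rmorph_nat.
Qed.

End Constr.
Unset Implicit Arguments.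
Local Open Scope classical_set_scope.

Theorem theorem4p2 (R : realType) (n N : nat) (hn : (0 < n)%N) (hnN : (n <= N)%N) :
  r1 R n N = n%:R / N%:R /\
  (forall F G : 'I_N -> 'rV[R[i]]_n, dual_pair F G ->
     (in_R1 F G <-> uniform1 F G) /\
     (in_R1 F G <-> forall i : 'I_N, ip (F i) (G i) = n%:R / N%:R)).
Proof.
have key : forall F G : 'I_N -> 'rV[R[i]]_n, dual_pair F G ->
    (r1FG F G = n%:R / N%:R <-> forall i, ip (F i) (G i) = n%:R / N%:R).
  move=> F G [_ [_ D]]; rewrite r1FG_E; split.
    exact: max_eq_all.
  exact: all_max.
set S := [set r : R | exists F G : 'I_N -> 'rV[R[i]]_n, dual_pair F G /\ r = r1FG F G].
have S0 : S (n%:R / N%:R).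
  exists (@F0 R n N), (@G0 R n N); split.
    exact: dual_pair_of_dual (dual_F0G0 hn hnN).
  apply/esym/(key _ _ (dual_pair_of_dual (dual_F0G0 hn hnN))).
  exact: ip_F0G0.
have lb : lbound S (n%:R / N%:R).
  move=> y [F [G [[_ [_ D]] ->]]]; rewrite r1FG_E; exact: max_ge.
have r1E : r1 R n N = n%:R / N%:R.
  rewrite /r1 -/S; apply/eqP; rewrite eq_le; apply/andP; split.
    apply: ge_inf => //; by exists (n%:R / N%:R).
  by apply: lb_le_inf => //; exists (n%:R / N%:R).
split => // F G DP.
have H := key F G DP.
have HR : in_R1 F G <-> forall i, ip (F i) (G i) = n%:R / N%:R.
  rewrite /in_R1 r1E; split; [by case => _ /H|by move=> h; split => //; apply/H].
split => //.
rewrite HR; split; first by move=> h; exists (n%:R / N%:R).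
case=> c hc i; rewrite hc.
have hs0 := dual_sum (proj2 (proj2 DP)).
have hs : \sum_(i < N) c = n%:R by rewrite -hs0; apply: eq_bigr => j _; rewrite hc.
rewrite sumr_const card_ord -[c *+ N]mulr_natl in hs.
have N0 : (N%:R : R[i]) != 0 by rewrite pnatr_eq0 -lt0n; apply: leq_trans hn hnN.
by rewrite -hs mulrC mulKf.
Qed.
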